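(* Let $\mathscr X=[0,1]^2$ with the Euclidean norm $\|\cdot\|_2$. Let $\mathbf x_1=(1/2,1/2)$ and, for $n\ge1$, let $\mathbf x_{n+1}$ be any point of $\mathrm{Arg}\max_{\mathbf x\in\mathscr X}\min_{1\le i\le n}\|\mathbf x-\mathbf x_i\|_2$, with $\mathbf X_n=\{\mathbf x_1,\ldots,\mathbf x_n\}$. For $n\ge5$ let $m=m(n)=\lfloor\log_2(\sqrt{n/2-1/4}-1/2)\rfloor$, and set $\gamma_m=2^{-m}$, $n_m=(2^m+1)^2+4^m$, $k_m=(2^{m+1}+1)^2$. Then: - for $n=n_m$: $\mathsf{SR}(\mathbf X_n)=\gamma_m\sqrt2/4$, $\mathsf{CR}(\mathbf X_n)=\gamma_m/2$, $\mathsf{MR}(\mathbf X_n)=\sqrt2$; - for $n=n_m+1,\ldots,k_m-1$: $\mathsf{SR}(\mathbf X_n)=\gamma_m/4$, $\mathsf{CR}(\mathbf X_n)=\gamma_m/2$, $\mathsf{MR}(\mathbf X_n)=2$; - for $n=k_m$: $\mathsf{SR}(\mathbf X_n)=\gamma_m/4$, $\mathsf{CR}(\mathbf X_n)=\gamma_m\sqrt2/4$, $\mathsf{MR}(\mathbf X_n)=\sqrt2$; - for $n=k_m+1,\ldots,n_{m+1}-1$: $\mathsf{SR}(\mathbf X_n)=\gamma_m\sqrt2/8$, $\mathsf{CR}(\mathbf X_n)=\gamma_m\sqrt2/4$, $\mathsf{MR}(\mathbf X_n)=2$.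
   Context: Fill distance $\mathsf{CR}(\mathbf X_n)=\sup_{\mathbf x\in\mathscr X}\min_{i\le n}\|\mathbf x-\mathbf x_i\|_2$; separation radius $\mathsf{SR}(\mathbf X_n)=\tfrac12\min_{i\ne j\le n}\|\mathbf x_i-\mathbf x_j\|_2$; mesh-ratio $\mathsf{MR}(\mathbf X_n)=\mathsf{CR}(\mathbf X_n)/\mathsf{SR}(\mathbf X_n)$. The integer $m(n)$ is the unique integer with $n_m\le n<n_{m+1}$. *)

(* Defs.v *)
From Stdlib Require Import Reals.
From Coquelicot Require Import Coquelicot.
Open Scope R_scope.

Definition pt := (R * R)%type.

Definition dist2 (p q : pt) : R :=
  sqrt ((fst p - fst q) ^ 2 + (snd p - snd q) ^ 2).

Definition inSq (p : pt) : Prop :=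
  0 <= fst p <= 1 /\ 0 <= snd p <= 1.

(* A design is a sequence X : nat -> pt, 1-indexed (X 0 is unused).
   mind X n x = min_{1 <= i <= n} ||x - X i||_2   (for n >= 1). *)
Fixpoint mind (X : nat -> pt) (n : nat) (x : pt) : R :=
  match n with
  | O => 0
  | S k => match k with
           | O => dist2 x (X 1%nat)
           | S _ => Rmin (mind X k x) (dist2 x (X n))
           end
  end.

Fixpoint minpair (X : nat -> pt) (n : nat) : R :=
  match n with
  | O => 0
  | S k => match k with
           | O => 0
           | S O => dist2 (X 1%nat) (X 2%nat)
           | S _ => Rmin (minpair X k) (mind X k (X n))
           end
  end.

Definition SR (X : nat -> pt) (n : nat) : R := minpair X n / 2.

Definition CR (X : nat -> pt) (n : nat) : R :=
  real (Lub_Rbar (fun v => exists x, inSq x /\ v = mind X n x)).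

Definition MR (X : nat -> pt) (n : nat) : R := CR X n / SR X n.

Definition log2 (x : R) : R := ln x / ln 2.

Definition gamma_ (m : nat) : R := / 2 ^ m.
Definition n_ (m : nat) : nat := ((2 ^ m + 1) ^ 2 + 4 ^ m)%nat.
Definition k_ (m : nat) : nat := ((2 ^ (S m) + 1) ^ 2)%nat.

(* Main.v *)
Require Import Defs.
From Stdlib Require Import Reals.
From Coquelicot Require Import Coquelicot.
From Stdlib Require Import Lra Lia Psatz List Classical.
Import ListNotations.
Open Scope R_scope.

Fixpoint Xs (X : nat -> pt) (n : nat) : list pt :=
  match n with O => nil | S k => X (S k) :: Xs X k end.

Lemma Xs_len X n : length (Xs X n) = n.
Proof. induction n; simpl; auto. Qed.

Definition sqd (p q : pt) : R := (fst p - fst q)^2 + (snd p - snd q)^2.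

Lemma sqd_ge0 p q : 0 <= sqd p q.
Proof. unfold sqd; apply Rplus_le_le_0_compat; apply pow2_ge_0. Qed.

Lemma dist_sqd p q : dist2 p q = sqrt (sqd p q).
Proof. reflexivity. Qed.

Lemma dist_sym p q : dist2 p q = dist2 q p.
Proof. unfold dist2; f_equal; ring. Qed.

Lemma sqd_self p : sqd p p = 0.
Proof. unfold sqd; ring. Qed.

Lemma dist_le r p q : 0 <= r -> sqd p q <= r^2 -> dist2 p q <= r.
Proof. intros Hr H. rewrite dist_sqd, <- (sqrt_pow2 r Hr). now apply sqrt_le_1_alt. Qed.

Lemma dist_ge r p q : 0 <= r -> r^2 <= sqd p q -> r <= dist2 p q.
Proof. intros Hr H. rewrite dist_sqd, <- (sqrt_pow2 r Hr). now apply sqrt_le_1_alt. Qed.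

Lemma dist_ge_inv r p q : 0 <= r -> r <= dist2 p q -> r^2 <= sqd p q.
Proof. intros Hr H. rewrite <- (pow2_sqrt (sqd p q)) by apply sqd_ge0.
  apply pow_incr; split; auto. Qed.

Lemma mind_S X n y : (1 <= n)%nat -> mind X (S n) y = Rmin (mind X n y) (dist2 y (X (S n))).
Proof. intros H. destruct n; [lia|reflexivity]. Qed.

Lemma mind_le X n y q : (1 <= n)%nat -> In q (Xs X n) -> mind X n y <= dist2 y q.
Proof.
  induction n as [|n IH]; intros Hn Hq; [lia|].
  destruct n.
  - simpl in Hq. destruct Hq as [<-|[]]. simpl. lra.
  - rewrite mind_S by lia. simpl in Hq. destruct Hq as [<-|Hq].
    + apply Rmin_r.
    + eapply Rle_trans; [apply Rmin_l|]. apply IH; [lia|exact Hq].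
Qed.

Lemma mind_ge X n y v : (1 <= n)%nat -> (forall q, In q (Xs X n) -> v <= dist2 y q) -> v <= mind X n y.
Proof.
  induction n as [|n IH]; intros Hn Hq; [lia|].
  destruct n.
  - simpl. apply Hq. simpl; auto.
  - rewrite mind_S by lia. apply Rmin_glb.
    + apply IH; [lia|]. intros q Hq'. apply Hq. simpl; auto.
    + apply Hq. simpl; auto.
Qed.

Definition greedy (X : nat -> pt) := forall n : nat, (1 <= n)%nat ->
     inSq (X (S n)) /\ (forall y : pt, inSq y -> mind X n y <= mind X n (X (S n))).

Definition Dv X n := mind X n (X (S n)).

Lemma Dv_mono X n : greedy X -> (1 <= n)%nat -> Dv X (S n) <= Dv X n.
Proof.
  intros G Hn. unfold Dv. rewrite mind_S by lia.
  eapply Rle_trans; [apply Rmin_l|]. apply (G n Hn). apply (G (S n)); lia.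
Qed.

Lemma minpair_D X k : greedy X -> minpair X (S (S k)) = Dv X (S k).
Proof.
  intros G. induction k.
  - simpl. unfold Dv. simpl. apply dist_sym.
  - change (minpair X (S (S (S k)))) with (Rmin (minpair X (S (S k))) (mind X (S (S k)) (X (S (S (S k)))))).
    rewrite IHk. apply Rmin_right. apply Dv_mono; auto; lia.
Qed.

Lemma CR_D X n : greedy X -> (1 <= n)%nat -> CR X n = Dv X n.
Proof.
  intros G Hn. unfold CR.
  rewrite (is_lub_Rbar_unique _ (Finite (Dv X n))); [reflexivity|].
  split.
  - intros v [x [Hx ->]]. simpl. apply (G n Hn). exact Hx.
  - intros b Hb. apply Hb. exists (X (S n)). split; [apply (G n Hn)|reflexivity].
Qed.

Lemma NoDup_prod {A B} (l1 : list A) (l2 : list B) :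
  NoDup l1 -> NoDup l2 -> NoDup (list_prod l1 l2).
Proof.
  induction l1 as [|a l1 IH]; intros H1 H2; simpl; [constructor|].
  inversion H1; subst. apply NoDup_app.
  - apply NoDup_map_NoDup_ForallPairs; auto. intros x y _ _ E. now inversion E.
  - auto.
  - intros [x y] Hin Hin2. apply in_map_iff in Hin as [z [E _]]. inversion E; subst.
    apply in_prod_iff in Hin2 as [? _]. contradiction.
Qed.

Lemma UG2 a b : 0<=a<=1 -> 0<=b<=1 -> 1/2 <= a^2+b^2 -> 1/2 <= (a-1)^2+b^2 -> 1/2 <= a^2+(b-1)^2 -> 1/2 <= (a-1)^2+(b-1)^2 -> a = 1/2 /\ b = 1/2.
Proof.
  intros Ha Hb H1 H2 H3 H4.
  destruct (Rle_dec a (1/2)); destruct (Rle_dec b (1/2)); split; nra.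
Qed.
Lemma UG1 a b : 0<=a<=1 -> 0<=b<=1 -> (a <= 1/2 -> b <= 1/2 -> a^2+b^2 <= 1/2) /\ (1/2 <= a -> b <= 1/2 -> (a-1)^2+b^2 <= 1/2)
  /\ (a <= 1/2 -> 1/2 <= b -> a^2+(b-1)^2 <= 1/2) /\ (1/2 <= a -> 1/2 <= b -> (a-1)^2+(b-1)^2 <= 1/2).
Proof. intros; repeat split; intros; nra. Qed.
Lemma UCq a b : 0<=a<=1/2 -> 0<=b<=1/2 -> a^2+b^2 <= 1/4 \/ (a-1/2)^2+(b-1/2)^2 <= 1/4.
Proof. intros. destruct (Rle_dec (a^2+b^2) (1/4)); [left; lra| right; nra]. Qed.
Lemma UCq2 a b : 0<=a<=1/2 -> 0<=b<=1/2 -> 1/4 <= a^2+b^2 -> 1/4 <= (a-1/2)^2+(b-1/2)^2 -> a*(1/2-a) = 0 /\ b*(1/2-b) = 0.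
Proof. intros. split; nra. Qed.
Lemma UC2 a b : 0<=a<=1 -> 0<=b<=1 -> 1/4 <= a^2+b^2 -> 1/4 <= (a-1)^2+b^2 -> 1/4 <= a^2+(b-1)^2 -> 1/4 <= (a-1)^2+(b-1)^2 -> 1/4 <= (a-1/2)^2+(b-1/2)^2 ->
  (a*(1/2-a)*(1-a) = 0) /\ (b*(1/2-b)*(1-b) = 0).
Proof.
  intros Ha Hb H1 H2 H3 H4 H5.
  assert (LA: forall a', (a' = a \/ a' = 1 - a) -> a'*(1/2-a') = 0 -> a*(1/2-a)*(1-a) = 0).
  { intros a' [->| ->] E. rewrite E; ring.
    replace (a*(1/2-a)*(1-a)) with (-((1-a)*(1/2-(1-a)))*a) by field. rewrite E; ring. }
  assert (LB: forall b', (b' = b \/ b' = 1 - b) -> b'*(1/2-b') = 0 -> b*(1/2-b)*(1-b) = 0).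
  { intros b' [->| ->] E. rewrite E; ring.
    replace (b*(1/2-b)*(1-b)) with (-((1-b)*(1/2-(1-b)))*b) by field. rewrite E; ring. }
  destruct (Rle_dec a (1/2)); destruct (Rle_dec b (1/2)).
  - assert (E: a*(1/2-a) = 0 /\ b*(1/2-b) = 0) by (apply UCq2; nra).
    destruct E; split; [apply (LA a)|apply (LB b)]; auto.
  - assert (E: a*(1/2-a) = 0 /\ (1-b)*(1/2-(1-b)) = 0) by (apply UCq2; nra).
    destruct E; split; [apply (LA a)|apply (LB (1-b))]; auto.
  - assert (E: (1-a)*(1/2-(1-a)) = 0 /\ b*(1/2-b) = 0) by (apply UCq2; nra).
    destruct E; split; [apply (LA (1-a))|apply (LB b)]; auto.
  - assert (E: (1-a)*(1/2-(1-a)) = 0 /\ (1-b)*(1/2-(1-b)) = 0) by (apply UCq2; nra).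
    destruct E; split; [apply (LA (1-a))|apply (LB (1-b))]; auto.
Qed.
Lemma UC1 a b : 0<=a<=1 -> 0<=b<=1 -> a^2+b^2 <= 1/4 \/ (a-1)^2+b^2 <= 1/4 \/ a^2+(b-1)^2 <= 1/4 \/ (a-1)^2+(b-1)^2 <= 1/4 \/ (a-1/2)^2+(b-1/2)^2 <= 1/4.
Proof.
  intros Ha Hb.
  destruct (Rle_dec a (1/2)); destruct (Rle_dec b (1/2)).
  - assert (H: a^2+b^2 <= 1/4 \/ (a-1/2)^2+(b-1/2)^2 <= 1/4) by (apply UCq; lra). tauto.
  - assert (H: a^2+(1-b)^2 <= 1/4 \/ (a-1/2)^2+((1-b)-1/2)^2 <= 1/4) by (apply UCq; lra).
    destruct H as [H|H]. right;right;left. nra. right;right;right;right. nra.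
  - assert (H: (1-a)^2+b^2 <= 1/4 \/ ((1-a)-1/2)^2+(b-1/2)^2 <= 1/4) by (apply UCq; lra).
    destruct H as [H|H]. right;left. nra. right;right;right;right. nra.
  - assert (H: (1-a)^2+(1-b)^2 <= 1/4 \/ ((1-a)-1/2)^2+((1-b)-1/2)^2 <= 1/4) by (apply UCq; lra).
    destruct H as [H|H]. right;right;right;left. nra. right;right;right;right. nra.
Qed.
Lemma trip a : a*(1/2-a)*(1-a) = 0 -> a = 0 \/ a = 1/2 \/ a = 1.
Proof. intros H. destruct (Rmult_integral _ _ H) as [H'|H']. destruct (Rmult_integral _ _ H'); [left|right;left]; lra. right;right; lra. Qed.

Definition Inv X (U Req : pt -> Prop) n :=
  NoDup (Xs X n) /\ (forall p, In p (Xs X n) -> U p) /\ (forall p, Req p -> In p (Xs X n)).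

Lemma step (X : nat -> pt) (U Req : pt -> Prop) (UL : list pt) (r : R)
  (G : greedy X) (HND : NoDup UL) (HUL : forall p, In p UL <-> U p) (Hr : 0 < r)
  (A1 : forall y, inSq y -> exists q, Req q /\ sqd y q <= r^2)
  (A2 : forall y, inSq y -> (forall q, Req q -> r^2 <= sqd y q) -> U y)
  (HB : forall p q, U p -> U q -> p <> q -> r^2 <= sqd p q)
  (HC : forall p, U p -> inSq p) n : (1 <= n)%nat -> (n < length UL)%nat -> Inv X U Req n ->
  Dv X n = r /\ Inv X U Req (S n).
Proof.
  intros Hn HL [HN [HU HR]].
  assert (Hex : exists u, In u UL /\ ~ In u (Xs X n)).
  { apply NNPP. intros Hne.
    assert (incl UL (Xs X n)).
    { intros u Hu. apply NNPP. intros Hnu. apply Hne. eauto. }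
    pose proof (NoDup_incl_length HND H). rewrite Xs_len in H0. lia. }
  destruct Hex as [u [Hu Hnu]]. apply HUL in Hu.
  assert (Hmu : r <= mind X n u).
  { apply mind_ge; auto. intros q Hq. apply dist_ge; [lra|].
    apply HB; auto. intros ->. contradiction. }
  destruct (G n Hn) as [Hsq Hmax].
  assert (Hge : r <= Dv X n) by (unfold Dv; eapply Rle_trans; [exact Hmu| apply Hmax; auto]).
  assert (Hle : Dv X n <= r).
  { destruct (A1 _ Hsq) as [q [Hq Hd]]. unfold Dv.
    eapply Rle_trans; [apply mind_le; [exact Hn| apply HR, Hq]|]. apply dist_le; auto; lra. }
  assert (HD : Dv X n = r) by lra.
  split; auto.
  assert (Hall : forall q, In q (Xs X n) -> r <= dist2 (X (S n)) q).
  { intros q Hq. rewrite <- HD. unfold Dv. apply mind_le; auto. }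
  assert (HUn : U (X (S n))).
  { apply A2; auto. intros q Hq. apply dist_ge_inv; [lra|]. apply Hall, HR, Hq. }
  assert (Hnin : ~ In (X (S n)) (Xs X n)).
  { intros Hin. specialize (Hall _ Hin). rewrite dist_sqd, sqd_self, sqrt_0 in Hall. lra. }
  split; [|split].
  - simpl. constructor; auto.
  - intros p [<-|Hp]; auto.
  - intros p Hp. simpl. right. auto.
Qed.

Lemma phase (X : nat -> pt) (U Req : pt -> Prop) (UL : list pt) (r : R)
  (G : greedy X) (HND : NoDup UL) (HUL : forall p, In p UL <-> U p) (Hr : 0 < r)
  (A1 : forall y, inSq y -> exists q, Req q /\ sqd y q <= r^2)
  (A2 : forall y, inSq y -> (forall q, Req q -> r^2 <= sqd y q) -> U y)
  (HB : forall p q, U p -> U q -> p <> q -> r^2 <= sqd p q)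
  (HC : forall p, U p -> inSq p) n0 : (1 <= n0)%nat -> (n0 <= length UL)%nat -> Inv X U Req n0 ->
  (forall n, (n0 <= n < length UL)%nat -> Dv X n = r) /\
  NoDup (Xs X (length UL)) /\ (forall p, In p (Xs X (length UL)) <-> U p).
Proof.
  intros H1 H2 HI.
  assert (Hi : forall t, (n0 + t <= length UL)%nat -> Inv X U Req (n0 + t) /\
            (forall n, (n0 <= n < n0 + t)%nat -> Dv X n = r)).
  { induction t; intros Ht.
    - rewrite Nat.add_0_r. split; auto. intros; lia.
    - destruct IHt as [HI' HD]; [lia|].
      destruct (step X U Req UL r G HND HUL Hr A1 A2 HB HC (n0 + t)) as [E HI2]; [lia|lia|auto|].
      rewrite Nat.add_succ_r. split; auto.
      intros n Hn. destruct (Nat.eq_dec n (n0 + t)) as [->|]; auto. apply HD; lia. }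
  destruct (Hi (length UL - n0)%nat) as [[HN [HU HR]] HD]; [lia|].
  replace (n0 + (length UL - n0))%nat with (length UL) in * by lia.
  split; [|split]; auto.
  intros p; split; auto. intros Hp. apply HUL in Hp.
  assert (incl UL (Xs X (length UL))).
  { apply NoDup_length_incl; auto. rewrite Xs_len; lia. intros q Hq; apply HUL, HU, Hq. }
  auto.
Qed.

Definition grid (N : nat) (p : pt) := exists i j, (i <= N)%nat /\ (j <= N)%nat /\
  p = (INR i / INR N, INR j / INR N).
Definition cent (K : nat) (p : pt) := exists i j, (i < K)%nat /\ (j < K)%nat /\
  p = ((2 * INR i + 1) / (2 * INR K), (2 * INR j + 1) / (2 * INR K)).
Definition inG K p := grid K p \/ cent K p.

Lemma cell K t : (1 <= K)%nat -> 0 <= t <= INR K ->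
  exists i, (S i <= K)%nat /\ INR i <= t <= INR i + 1.
Proof.
  induction K as [|K IH]; intros HK Ht; [lia|].
  destruct (Nat.eq_dec K 0) as [->|HK0].
  - exists 0%nat. simpl in *. split; [lia|lra].
  - destruct (Rle_dec t (INR K)).
    + destruct IH as [i [Hi Hti]]; [lia|lra|]. exists i; split; [lia|lra].
    + exists K. rewrite S_INR in Ht. split; [lia|lra].
Qed.

Lemma nat_sq x x' : x <> x' -> 1 <= (INR x - INR x')^2.
Proof.
  intros H. destruct (Nat.lt_gt_cases x x') as [[Hl|Hl] _]; auto.
  - apply le_INR in Hl. rewrite S_INR in Hl. nra.
  - apply le_INR in Hl. rewrite S_INR in Hl. nra.
Qed.

Lemma nat_half x x' : 1/4 <= (INR x - INR x' - 1/2)^2.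
Proof.
  destruct (Compare_dec.le_lt_dec x x') as [Hl|Hl].
  - apply le_INR in Hl. nra.
  - apply le_INR in Hl. rewrite S_INR in Hl. nra.
Qed.

Lemma sqd_form p q u v k : 0 < k -> fst p - fst q = u / k -> snd p - snd q = v / k ->
  sqd p q = (u^2 + v^2) / k^2.
Proof. intros Hk H1 H2. unfold sqd. rewrite H1, H2. field. lra. Qed.

Lemma divk_le k A B : 0 < k -> (A <= B <-> A / k^2 <= B / k^2).
Proof.
  intros Hk. assert (0 < k^2) by (apply pow_lt; lra).
  assert (0 < / k^2) by (apply Rinv_0_lt_compat; lra).
  unfold Rdiv. split; intros H'.
  - apply Rmult_le_compat_r; lra.
  - apply Rmult_le_reg_r with (/ k^2); auto.
Qed.

Lemma rG2 k : 0 < k -> (sqrt 2 / (2 * k))^2 = (1/2) / k^2.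
Proof.
  intros Hk. replace ((sqrt 2 / (2 * k))^2) with ((sqrt 2 * sqrt 2) / (4 * k^2)) by (field; lra).
  rewrite sqrt_sqrt by lra. field. lra.
Qed.

Lemma rC2 K : (1 <= K)%nat -> (1 / INR (2 * K))^2 = (1/4) / (INR K)^2.
Proof.
  intros HK. assert (0 < INR K) by (apply lt_0_INR; lia).
  rewrite mult_INR. simpl (INR 2). field. lra.
Qed.

Lemma INRpos K : (1 <= K)%nat -> 0 < INR K.
Proof. intros; apply lt_0_INR; lia. Qed.

Lemma cell2 K y : (1 <= K)%nat -> inSq y -> exists i j a b,
  (S i <= K)%nat /\ (S j <= K)%nat /\ 0 <= a <= 1 /\ 0 <= b <= 1 /\
  fst y = (INR i + a) / INR K /\ snd y = (INR j + b) / INR K.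
Proof.
  intros HK [Hy1 Hy2]. pose proof (INRpos K HK) as Hk.
  destruct (cell K (fst y * INR K)) as [i [Hi Hti]]; auto. split; nra.
  destruct (cell K (snd y * INR K)) as [j [Hj Htj]]; auto. split; nra.
  exists i, j, (fst y * INR K - INR i), (snd y * INR K - INR j).
  split; [lia|split; [lia|]]. repeat split; try lra; field; lra.
Qed.

Lemma frac01 u k : 0 < k -> 0 <= u <= k -> 0 <= u / k <= 1.
Proof. intros Hk Hu. assert (E: u / k * k = u) by (field; lra). nra. Qed.

Lemma grid_sq N p : (1 <= N)%nat -> grid N p -> inSq p.
Proof.
  intros HN [x [y [Hx [Hy ->]]]]. pose proof (INRpos N HN).
  apply le_INR in Hx. apply le_INR in Hy. pose proof (pos_INR x). pose proof (pos_INR y).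
  split; apply frac01; lra.
Qed.

Lemma inG_sq K p : (1 <= K)%nat -> inG K p -> inSq p.
Proof.
  intros HK [Hp|[x [y [Hx [Hy ->]]]]]; [eapply grid_sq; eauto|].
  pose proof (INRpos K HK).
  apply le_INR in Hx. apply le_INR in Hy. rewrite S_INR in Hx, Hy. pose proof (pos_INR x). pose proof (pos_INR y).
  split; apply frac01; lra.
Qed.

Lemma grid_sep N p q : (1 <= N)%nat -> grid N p -> grid N q -> p <> q -> (1 / INR N)^2 <= sqd p q.
Proof.
  intros HN [x [y [Hx [Hy ->]]]] [x' [y' [Hx' [Hy' ->]]]] Hne. pose proof (INRpos N HN).
  rewrite (sqd_form _ _ (INR x - INR x') (INR y - INR y') (INR N)); auto; try (simpl; field; lra).
  replace ((1 / INR N)^2) with (1 / INR N ^2) by (field; lra).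
  apply divk_le; auto.
  destruct (Nat.eq_dec x x') as [<-|Hxx].
  - destruct (Nat.eq_dec y y') as [<-|Hyy]; [congruence|].
    pose proof (nat_sq _ _ Hyy). pose proof (pow2_ge_0 (INR x - INR x)). lra.
  - pose proof (nat_sq _ _ Hxx). pose proof (pow2_ge_0 (INR y - INR y')). lra.
Qed.

Lemma inG_sep K p q : (1 <= K)%nat -> inG K p -> inG K q -> p <> q ->
  (sqrt 2 / (2 * INR K))^2 <= sqd p q.
Proof.
  intros HK Hp Hq Hne. pose proof (INRpos K HK) as Hk. rewrite rG2 by auto.
  destruct Hp as [[x [y [Hx [Hy ->]]]]|[x [y [Hx [Hy ->]]]]];
  destruct Hq as [[x' [y' [Hx' [Hy' ->]]]]|[x' [y' [Hx' [Hy' ->]]]]].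
  - rewrite (sqd_form _ _ (INR x - INR x') (INR y - INR y') (INR K)); auto; try (simpl; field; lra).
    apply divk_le; auto.
    destruct (Nat.eq_dec x x') as [<-|Hxx].
    + destruct (Nat.eq_dec y y') as [<-|Hyy]; [congruence|].
      pose proof (nat_sq _ _ Hyy). pose proof (pow2_ge_0 (INR x - INR x)). lra.
    + pose proof (nat_sq _ _ Hxx). pose proof (pow2_ge_0 (INR y - INR y')). lra.
  - rewrite (sqd_form _ _ (INR x - INR x' - 1/2) (INR y - INR y' - 1/2) (INR K)); auto; try (simpl; field; lra).
    apply divk_le; auto. pose proof (nat_half x x'). pose proof (nat_half y y'). lra.
  - rewrite (sqd_form _ _ (INR x - INR x' + 1/2) (INR y - INR y' + 1/2) (INR K)); auto; try (simpl; field; lra).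
    apply divk_le; auto. pose proof (nat_half x' x). pose proof (nat_half y' y).
    replace ((INR x - INR x' + 1/2)^2) with ((INR x' - INR x - 1/2)^2) by ring.
    replace ((INR y - INR y' + 1/2)^2) with ((INR y' - INR y - 1/2)^2) by ring. lra.
  - rewrite (sqd_form _ _ (INR x - INR x') (INR y - INR y') (INR K)); auto; try (simpl; field; lra).
    apply divk_le; auto.
    destruct (Nat.eq_dec x x') as [<-|Hxx].
    + destruct (Nat.eq_dec y y') as [<-|Hyy]; [congruence|].
      pose proof (nat_sq _ _ Hyy). pose proof (pow2_ge_0 (INR x - INR x)). lra.
    + pose proof (nat_sq _ _ Hxx). pose proof (pow2_ge_0 (INR y - INR y')). lra.
Qed.

Lemma GA1 K y : (1 <= K)%nat -> inSq y -> exists q, grid K q /\ sqd y q <= (sqrt 2 / (2 * INR K))^2.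
Proof.
  intros HK Hy. pose proof (INRpos K HK) as Hk. rewrite rG2 by auto.
  destruct (cell2 K y HK Hy) as [i [j [a [b [Hi [Hj [Ha [Hb [E1 E2]]]]]]]]].
  destruct (UG1 a b Ha Hb) as [C1 [C2 [C3 C4]]].
  destruct (Rle_dec a (1/2)); destruct (Rle_dec b (1/2)).
  - exists (INR i / INR K, INR j / INR K). split. unfold grid; exists i, j; split; [lia|split; [lia|reflexivity]].
    rewrite (sqd_form _ _ a b (INR K)); auto; try (cbn [fst snd]; rewrite ?E1, ?E2; field; lra).
    apply divk_le; auto.
  - exists (INR i / INR K, INR (S j) / INR K). split. unfold grid; exists i, (S j); split; [lia|split; [lia|reflexivity]].
    rewrite (sqd_form _ _ a (b-1) (INR K)); auto; try (cbn [fst snd]; rewrite ?E1, ?E2, ?S_INR; field; lra).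
    apply divk_le; auto. apply C3; lra.
  - exists (INR (S i) / INR K, INR j / INR K). split. unfold grid; exists (S i), j; split; [lia|split; [lia|reflexivity]].
    rewrite (sqd_form _ _ (a-1) b (INR K)); auto; try (cbn [fst snd]; rewrite ?E1, ?E2, ?S_INR; field; lra).
    apply divk_le; auto. apply C2; lra.
  - exists (INR (S i) / INR K, INR (S j) / INR K). split. unfold grid; exists (S i), (S j); split; [lia|split; [lia|reflexivity]].
    rewrite (sqd_form _ _ (a-1) (b-1) (INR K)); auto; try (cbn [fst snd]; rewrite ?E1, ?E2, ?S_INR; field; lra).
    apply divk_le; auto. apply C4; lra.
Qed.

Lemma GA2 K y : (1 <= K)%nat -> inSq y ->
  (forall q, grid K q -> (sqrt 2 / (2 * INR K))^2 <= sqd y q) -> inG K y.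
Proof.
  intros HK Hy H. pose proof (INRpos K HK) as Hk. rewrite rG2 in H by auto.
  destruct (cell2 K y HK Hy) as [i [j [a [b [Hi [Hj [Ha [Hb [E1 E2]]]]]]]]].
  assert (H1 : 1/2 <= a^2 + b^2).
  { apply (divk_le (INR K)); auto. rewrite <- (sqd_form y (INR i / INR K, INR j / INR K)); auto.
    apply H. unfold grid; exists i, j; split; [lia|split; [lia|reflexivity]]. all: cbn [fst snd]; rewrite ?E1, ?E2; field; lra. }
  assert (H2 : 1/2 <= (a-1)^2 + b^2).
  { apply (divk_le (INR K)); auto. rewrite <- (sqd_form y (INR (S i) / INR K, INR j / INR K)); auto.
    apply H. unfold grid; exists (S i), j; split; [lia|split; [lia|reflexivity]]. all: cbn [fst snd]; rewrite ?E1, ?E2, ?S_INR; field; lra. }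
  assert (H3 : 1/2 <= a^2 + (b-1)^2).
  { apply (divk_le (INR K)); auto. rewrite <- (sqd_form y (INR i / INR K, INR (S j) / INR K)); auto.
    apply H. unfold grid; exists i, (S j); split; [lia|split; [lia|reflexivity]]. all: cbn [fst snd]; rewrite ?E1, ?E2, ?S_INR; field; lra. }
  assert (H4 : 1/2 <= (a-1)^2 + (b-1)^2).
  { apply (divk_le (INR K)); auto. rewrite <- (sqd_form y (INR (S i) / INR K, INR (S j) / INR K)); auto.
    apply H. unfold grid; exists (S i), (S j); split; [lia|split; [lia|reflexivity]]. all: cbn [fst snd]; rewrite ?E1, ?E2, ?S_INR; field; lra. }
  destruct (UG2 a b Ha Hb H1 H2 H3 H4) as [-> ->].
  right. exists i, j. split; [lia|split; [lia|]].
  destruct y as [y1 y2]. simpl in E1, E2. rewrite E1, E2. f_equal; field; lra.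
Qed.

Lemma half_idx K i a : (S i <= K)%nat -> (a = 0 \/ a = 1/2 \/ a = 1) ->
  exists x, (x <= 2 * K)%nat /\ (INR i + a) / INR K = INR x / INR (2 * K).
Proof.
  intros Hi Ha. assert (Hk : 0 < INR K) by (apply lt_0_INR; lia).
  destruct Ha as [->|[->| ->]].
  - exists (2 * i)%nat. split; [lia|]. rewrite !mult_INR. simpl (INR 2). field. lra.
  - exists (2 * i + 1)%nat. split; [lia|]. rewrite plus_INR, !mult_INR. simpl (INR 2). simpl (INR 1). field. lra.
  - exists (2 * i + 2)%nat. split; [lia|]. rewrite plus_INR, !mult_INR. simpl (INR 2). field. lra.
Qed.

Lemma CA1 K y : (1 <= K)%nat -> inSq y -> exists q, inG K q /\ sqd y q <= (1 / INR (2 * K))^2.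
Proof.
  intros HK Hy. pose proof (INRpos K HK) as Hk. rewrite rC2 by auto.
  destruct (cell2 K y HK Hy) as [i [j [a [b [Hi [Hj [Ha [Hb [E1 E2]]]]]]]]].
  destruct (UC1 a b Ha Hb) as [C|[C|[C|[C|C]]]].
  - exists (INR i / INR K, INR j / INR K). split. left; unfold grid; exists i, j; split; [lia|split; [lia|reflexivity]].
    rewrite (sqd_form _ _ a b (INR K)); auto; try (cbn [fst snd]; rewrite ?E1, ?E2; field; lra).
    apply divk_le; auto.
  - exists (INR (S i) / INR K, INR j / INR K). split. left; unfold grid; exists (S i), j; split; [lia|split; [lia|reflexivity]].
    rewrite (sqd_form _ _ (a-1) b (INR K)); auto; try (cbn [fst snd]; rewrite ?E1, ?E2, ?S_INR; field; lra).
    apply divk_le; auto.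
  - exists (INR i / INR K, INR (S j) / INR K). split. left; unfold grid; exists i, (S j); split; [lia|split; [lia|reflexivity]].
    rewrite (sqd_form _ _ a (b-1) (INR K)); auto; try (cbn [fst snd]; rewrite ?E1, ?E2, ?S_INR; field; lra).
    apply divk_le; auto.
  - exists (INR (S i) / INR K, INR (S j) / INR K). split. left; unfold grid; exists (S i), (S j); split; [lia|split; [lia|reflexivity]].
    rewrite (sqd_form _ _ (a-1) (b-1) (INR K)); auto; try (cbn [fst snd]; rewrite ?E1, ?E2, ?S_INR; field; lra).
    apply divk_le; auto.
  - exists ((2 * INR i + 1) / (2 * INR K), (2 * INR j + 1) / (2 * INR K)). split.
    right; unfold cent; exists i, j; split; [lia|split; [lia|reflexivity]].
    rewrite (sqd_form _ _ (a-1/2) (b-1/2) (INR K)); auto; try (cbn [fst snd]; rewrite ?E1, ?E2; field; lra).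
    apply divk_le; auto.
Qed.

Lemma CA2 K y : (1 <= K)%nat -> inSq y ->
  (forall q, inG K q -> (1 / INR (2 * K))^2 <= sqd y q) -> grid (2 * K) y.
Proof.
  intros HK Hy H. pose proof (INRpos K HK) as Hk. rewrite rC2 in H by auto.
  destruct (cell2 K y HK Hy) as [i [j [a [b [Hi [Hj [Ha [Hb [E1 E2]]]]]]]]].
  assert (H1 : 1/4 <= a^2 + b^2).
  { apply (divk_le (INR K)); auto. rewrite <- (sqd_form y (INR i / INR K, INR j / INR K)); auto.
    apply H. left; unfold grid; exists i, j; split; [lia|split; [lia|reflexivity]]. all: cbn [fst snd]; rewrite ?E1, ?E2; field; lra. }
  assert (H2 : 1/4 <= (a-1)^2 + b^2).
  { apply (divk_le (INR K)); auto. rewrite <- (sqd_form y (INR (S i) / INR K, INR j / INR K)); auto.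
    apply H. left; unfold grid; exists (S i), j; split; [lia|split; [lia|reflexivity]]. all: cbn [fst snd]; rewrite ?E1, ?E2, ?S_INR; field; lra. }
  assert (H3 : 1/4 <= a^2 + (b-1)^2).
  { apply (divk_le (INR K)); auto. rewrite <- (sqd_form y (INR i / INR K, INR (S j) / INR K)); auto.
    apply H. left; unfold grid; exists i, (S j); split; [lia|split; [lia|reflexivity]]. all: cbn [fst snd]; rewrite ?E1, ?E2, ?S_INR; field; lra. }
  assert (H4 : 1/4 <= (a-1)^2 + (b-1)^2).
  { apply (divk_le (INR K)); auto. rewrite <- (sqd_form y (INR (S i) / INR K, INR (S j) / INR K)); auto.
    apply H. left; unfold grid; exists (S i), (S j); split; [lia|split; [lia|reflexivity]]. all: cbn [fst snd]; rewrite ?E1, ?E2, ?S_INR; field; lra. }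
  assert (H5 : 1/4 <= (a-1/2)^2 + (b-1/2)^2).
  { apply (divk_le (INR K)); auto.
    rewrite <- (sqd_form y ((2 * INR i + 1) / (2 * INR K), (2 * INR j + 1) / (2 * INR K))); auto.
    apply H. right; unfold cent; exists i, j; split; [lia|split; [lia|reflexivity]]. all: cbn [fst snd]; rewrite ?E1, ?E2; field; lra. }
  destruct (UC2 a b Ha Hb H1 H2 H3 H4 H5) as [Ta Tb].
  destruct (half_idx K i a Hi (trip a Ta)) as [x [Hx Ex]].
  destruct (half_idx K j b Hj (trip b Tb)) as [z [Hz Ez]].
  exists x, z. split; [lia|split; [lia|]].
  destruct y as [y1 y2]. simpl in E1, E2. rewrite E1, E2, Ex, Ez. reflexivity.
Qed.

Lemma PA1 y : inSq y -> exists q, q = (1/2, 1/2) /\ sqd y q <= (sqrt 2 / (2 * INR 1))^2.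
Proof.
  intros [H1 H2]. exists (1/2, 1/2). split; auto. rewrite rG2 by (simpl; lra).
  unfold sqd; simpl. nra.
Qed.

Lemma PA2 y : inSq y -> (forall q, q = (1/2, 1/2) -> (sqrt 2 / (2 * INR 1))^2 <= sqd y q) -> inG 1 y.
Proof.
  intros [H1 H2] H. specialize (H _ eq_refl). rewrite rG2 in H by (simpl; lra).
  unfold sqd in H; simpl in H.
  destruct y as [y1 y2]; simpl in *.
  assert (E1 : y1 * (1 - y1) = 0) by nra.
  assert (E2 : y2 * (1 - y2) = 0) by nra.
  left. 
  assert (F: forall t, t * (1 - t) = 0 -> exists x, (x <= 1)%nat /\ t = INR x / INR 1).
  { intros t Et. destruct (Rmult_integral _ _ Et).
    - exists 0%nat. split; [lia|]. simpl. lra.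
    - exists 1%nat. split; [lia|]. simpl. lra. }
  destruct (F y1 E1) as [x [Hx Ex]]. destruct (F y2 E2) as [z [Hz Ez]].
  exists x, z. split; [lia|split;[lia|]]. rewrite Ex, Ez. reflexivity.
Qed.



Lemma div_inj k a b : 0 < k -> a / k = b / k -> a = b.
Proof. intros Hk H. apply Rmult_eq_reg_r with (/ k). exact H. apply Rinv_neq_0_compat; lra. Qed.

Definition gridL N := map (fun ij => (INR (fst ij) / INR N, INR (snd ij) / INR N))
  (list_prod (seq 0 (S N)) (seq 0 (S N))).
Definition centL K := map (fun ij => ((2 * INR (fst ij) + 1) / (2 * INR K), (2 * INR (snd ij) + 1) / (2 * INR K)))
  (list_prod (seq 0 K) (seq 0 K)).
Definition inGL K := gridL K ++ centL K.

Lemma gridL_len N : length (gridL N) = (S N * S N)%nat.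
Proof. unfold gridL. rewrite length_map, length_prod, length_seq. reflexivity. Qed.

Lemma centL_len K : length (centL K) = (K * K)%nat.
Proof. unfold centL. rewrite length_map, length_prod, length_seq. reflexivity. Qed.

Lemma inGL_len K : length (inGL K) = (S K * S K + K * K)%nat.
Proof. unfold inGL. rewrite length_app, gridL_len, centL_len. reflexivity. Qed.

Lemma gridL_in N p : In p (gridL N) <-> grid N p.
Proof.
  unfold gridL, grid. rewrite in_map_iff. split.
  - intros [[i j] [E Hin]]. apply in_prod_iff in Hin as [Hi Hj]. apply in_seq in Hi, Hj.
    exists i, j. simpl in E. split; [lia|split; [lia|auto]].
  - intros [i [j [Hi [Hj ->]]]]. exists (i, j). split; auto.
    apply in_prod_iff; split; apply in_seq; lia.
Qed.

Lemma centL_in K p : In p (centL K) <-> cent K p.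
Proof.
  unfold centL, cent. rewrite in_map_iff. split.
  - intros [[i j] [E Hin]]. apply in_prod_iff in Hin as [Hi Hj]. apply in_seq in Hi, Hj.
    exists i, j. simpl in E. split; [lia|split; [lia|auto]].
  - intros [i [j [Hi [Hj ->]]]]. exists (i, j). split; auto.
    apply in_prod_iff; split; apply in_seq; lia.
Qed.

Lemma inGL_in K p : In p (inGL K) <-> inG K p.
Proof. unfold inGL, inG. rewrite in_app_iff, gridL_in, centL_in. tauto. Qed.

Lemma gridL_nd N : (1 <= N)%nat -> NoDup (gridL N).
Proof.
  intros HN. pose proof (INRpos N HN). unfold gridL.
  apply NoDup_map_NoDup_ForallPairs; [|apply NoDup_prod; apply seq_NoDup].
  intros [i j] [i' j'] _ _ E. simpl in E. inversion E as [[E1 E2]].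
  apply div_inj in E1; auto. apply div_inj in E2; auto.
  apply INR_eq in E1, E2. subst; auto.
Qed.

Lemma centL_nd K : (1 <= K)%nat -> NoDup (centL K).
Proof.
  intros HN. pose proof (INRpos K HN). unfold centL.
  apply NoDup_map_NoDup_ForallPairs; [|apply NoDup_prod; apply seq_NoDup].
  intros [i j] [i' j'] _ _ E. simpl in E. inversion E as [[E1 E2]].
  apply div_inj in E1; [|lra]. apply div_inj in E2; [|lra].
  assert (INR i = INR i') by lra. assert (INR j = INR j') by lra.
  apply INR_eq in H0, H1. subst; auto.
Qed.

Lemma inGL_nd K : (1 <= K)%nat -> NoDup (inGL K).
Proof.
  intros HK. pose proof (INRpos K HK). unfold inGL. apply NoDup_app; [apply gridL_nd|apply centL_nd|]; auto.
  intros p Hp Hq. apply gridL_in in Hp. apply centL_in in Hq.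
  destruct Hp as [x [y [_ [_ ->]]]]. destruct Hq as [i [j [_ [_ E]]]].
  inversion E as [[E1 E2]].
  assert (E3 : INR x / INR K = (INR (2 * i + 1)) / (2 * INR K)) by (rewrite plus_INR, mult_INR; simpl (INR 2); simpl (INR 1); exact E1).
  assert (E4 : 2 * INR x = INR (2 * i + 1)).
  { apply (f_equal (fun t => t * (2 * INR K))) in E3. field_simplify in E3; lra. }
  replace (2 * INR x) with (INR (2 * x)) in E4 by (rewrite mult_INR; reflexivity).
  apply INR_eq in E4. lia.
Qed.

Lemma pow2_ge1 m : (1 <= 2 ^ m)%nat.
Proof. induction m; simpl; lia. Qed.

Lemma n_eq m : n_ m = (S (2^m) * S (2^m) + 2^m * 2^m)%nat.
Proof.
  unfold n_. replace 4%nat with (2*2)%nat by reflexivity. rewrite Nat.pow_mul_l.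
  simpl. lia.
Qed.

Lemma k_eq m : k_ m = (S (2 * 2^m) * S (2 * 2^m))%nat.
Proof. unfold k_. simpl. lia. Qed.

Lemma inG_sub K p : (1 <= K)%nat -> inG K p -> grid (2 * K) p.
Proof.
  intros HK Hp. pose proof (INRpos K HK).
  destruct Hp as [[i [j [Hi [Hj ->]]]]|[i [j [Hi [Hj ->]]]]].
  - exists (2 * i)%nat, (2 * j)%nat. split; [lia|split; [lia|]].
    rewrite !mult_INR. simpl (INR 2). f_equal; field; lra.
  - exists (2 * i + 1)%nat, (2 * j + 1)%nat. split; [lia|split; [lia|]].
    rewrite !plus_INR, !mult_INR. simpl (INR 2). simpl (INR 1). reflexivity.
Qed.

Lemma pre X : greedy X -> X 1%nat = (1/2, 1/2) ->
  (forall n, (1 <= n < 5)%nat -> Dv X n = sqrt 2 / (2 * INR 1)) /\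
  NoDup (Xs X 5) /\ (forall p, In p (Xs X 5) <-> inG 1 p).
Proof.
  intros G H1.
  assert (Hr : 0 < sqrt 2 / (2 * INR 1)) by (simpl; apply Rdiv_lt_0_compat; [apply sqrt_lt_R0|]; lra).
  assert (HL : @length pt (inGL 1) = 5%nat) by (rewrite inGL_len; reflexivity).
  destruct (phase X (inG 1) (fun q => q = (1/2, 1/2)) (inGL 1) (sqrt 2 / (2 * INR 1)) G
    (inGL_nd 1 (le_n 1)) (inGL_in 1) Hr PA1 PA2 (fun p q => inG_sep 1 p q (le_n 1)) (fun p => inG_sq 1 p (le_n 1)) 1)
    as [HD [HN HI]].
  - lia.
  - rewrite HL; lia.
  - split; [|split].
    + simpl. constructor; [intros []|constructor].
    + intros p [<-|[]]. rewrite H1. right. exists 0%nat, 0%nat. split; [lia|split;[lia|]].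
      simpl. f_equal; field.
    + intros p ->. left. auto.
  - rewrite HL in HD, HN, HI. auto.
Qed.

Lemma stepm X m : greedy X ->
  NoDup (Xs X (n_ m)) -> (forall p, In p (Xs X (n_ m)) <-> inG (2^m) p) ->
  (forall n, (n_ m <= n < k_ m)%nat -> Dv X n = 1 / INR (2 * 2^m)) /\
  (forall n, (k_ m <= n < n_ (S m))%nat -> Dv X n = sqrt 2 / (2 * INR (2 * 2^m))) /\
  NoDup (Xs X (n_ (S m))) /\ (forall p, In p (Xs X (n_ (S m))) <-> inG (2 * 2^m) p).
Proof.
  intros G HN0 HI0. pose proof (pow2_ge1 m) as HK. set (K := (2^m)%nat) in *.
  assert (HK2 : (1 <= 2 * K)%nat) by lia.
  assert (Hr : 0 < 1 / INR (2 * K)) by (apply Rdiv_lt_0_compat; [lra|apply INRpos; lia]).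
  assert (HLC : @length pt (gridL (2 * K)) = k_ m) by (rewrite gridL_len, k_eq; reflexivity).
  destruct (phase X (grid (2 * K)) (inG K) (gridL (2 * K)) (1 / INR (2 * K)) G
    (gridL_nd _ HK2) (gridL_in _) Hr (fun y => CA1 K y HK) (fun y => CA2 K y HK) (fun p q => grid_sep _ p q HK2) (fun p => grid_sq _ p HK2) (n_ m))
    as [HD [HN HI]].
  - rewrite n_eq. lia.
  - rewrite HLC, n_eq, k_eq. unfold K. nia.
  - split; [auto|split].
    + intros p Hp. apply inG_sub; auto. apply HI0; auto.
    + intros p Hp. apply HI0; auto.
  - rewrite HLC in HD, HN, HI.
    assert (Hr2 : 0 < sqrt 2 / (2 * INR (2 * K))) by
      (apply Rdiv_lt_0_compat; [apply sqrt_lt_R0; lra| pose proof (INRpos _ HK2); lra]).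
    assert (HLG : @length pt (inGL (2 * K)) = n_ (S m)) by (rewrite inGL_len, n_eq; reflexivity).
    destruct (phase X (inG (2 * K)) (grid (2 * K)) (inGL (2 * K)) (sqrt 2 / (2 * INR (2 * K))) G
      (inGL_nd _ HK2) (inGL_in _) Hr2 (fun y => GA1 _ y HK2) (fun y => GA2 _ y HK2) (fun p q => inG_sep _ p q HK2) (fun p => inG_sq _ p HK2) (k_ m))
      as [HD2 [HN2 HI2]].
    + rewrite k_eq. lia.
    + rewrite HLG, n_eq, k_eq. simpl Nat.pow. fold K. nia.
    + split; [auto|split].
      * intros p Hp. left. apply HI; auto.
      * intros p Hp. apply HI; auto.
    + rewrite HLG in HD2, HN2, HI2. split; [|split; [|split]]; auto.
Qed.

Lemma two_sqrt : 2 / sqrt 2 = sqrt 2.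
Proof.
  assert (S2 : sqrt 2 * sqrt 2 = 2) by (apply sqrt_sqrt; lra).
  assert (Sp : 0 < sqrt 2) by (apply sqrt_lt_R0; lra).
  apply Rmult_eq_reg_r with (sqrt 2); [|lra]. field_simplify; lra.
Qed.

Lemma allm X : greedy X -> X 1%nat = (1/2, 1/2) -> forall m,
  NoDup (Xs X (n_ m)) /\ (forall p, In p (Xs X (n_ m)) <-> inG (2^m) p).
Proof.
  intros G H1. induction m as [|m [IHa IHb]].
  - destruct (pre X G H1) as [_ [HN HI]]. split; [exact HN| exact HI].
  - destruct (stepm X m G IHa IHb) as [_ [_ [HN HI]]]. split; [exact HN| exact HI].
Qed.

Lemma Dvals X m : greedy X -> X 1%nat = (1/2, 1/2) ->
  (forall n, (n_ m <= n < k_ m)%nat -> Dv X n = 1 / INR (2 * 2^m)) /\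
  (forall n, (k_ m <= n < n_ (S m))%nat -> Dv X n = sqrt 2 / (2 * INR (2 * 2^m))) /\
  Dv X (pred (n_ m)) = sqrt 2 / (2 * INR (2^m)).
Proof.
  intros G H1. destruct (allm X G H1 m) as [HN HI].
  destruct (stepm X m G HN HI) as [DA [DB _]]. split; [exact DA|split; [exact DB|]].
  destruct m as [|m].
  - destruct (pre X G H1) as [D0 _]. apply D0. change (n_ 0) with 5%nat. simpl. lia.
  - destruct (allm X G H1 m) as [HN' HI'].
    destruct (stepm X m G HN' HI') as [_ [DB' _]]. apply DB'.
    pose proof (pow2_ge1 m). rewrite !n_eq, k_eq. simpl Nat.pow. nia.
Qed.

Lemma SR_D X n : greedy X -> (2 <= n)%nat -> SR X n = Dv X (pred n) / 2.
Proof.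
  intros G Hn. destruct n as [|[|k]]; try lia. unfold SR. rewrite minpair_D by auto. reflexivity.
Qed.

Theorem theorem3
  (X : nat -> pt)
  (H1 : X 1%nat = (1/2, 1/2))
  (Hgreedy : forall n : nat, (1 <= n)%nat ->
     inSq (X (S n)) /\
     (forall y : pt, inSq y -> mind X n y <= mind X n (X (S n))))
  (n m : nat)
  (Hn : (5 <= n)%nat)
  (Hm : INR m <= log2 (sqrt (INR n / 2 - 1 / 4) - 1 / 2) < INR m + 1) :
  (n = n_ m ->
     SR X n = gamma_ m * sqrt 2 / 4 /\ CR X n = gamma_ m / 2 /\ MR X n = sqrt 2) /\
  ((n_ m < n < k_ m)%nat ->
     SR X n = gamma_ m / 4 /\ CR X n = gamma_ m / 2 /\ MR X n = 2) /\
  (n = k_ m ->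
     SR X n = gamma_ m / 4 /\ CR X n = gamma_ m * sqrt 2 / 4 /\ MR X n = sqrt 2) /\
  ((k_ m < n < n_ (S m))%nat ->
     SR X n = gamma_ m * sqrt 2 / 8 /\ CR X n = gamma_ m * sqrt 2 / 4 /\ MR X n = 2).
Proof.
  assert (G : greedy X) by exact Hgreedy.
  destruct (Dvals X m G H1) as [DA [DB DC]].
  pose proof (pow2_ge1 m) as HK.
  assert (Hnm : (5 <= n_ m)%nat) by (rewrite n_eq; nia).
  assert (Hnk : (n_ m < k_ m)%nat) by (rewrite n_eq, k_eq; nia).
  assert (Hkn : (k_ m < n_ (S m))%nat) by (rewrite n_eq, k_eq; simpl Nat.pow; nia).
  assert (Eg : INR (2^m) = 2^m) by (rewrite pow_INR; reflexivity).
  assert (E2g : INR (2 * 2^m) = 2 * 2^m) by (rewrite mult_INR, Eg; reflexivity).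
  assert (gp : 0 < 2^m) by (apply pow_lt; lra).
  assert (Sp : 0 < sqrt 2) by (apply sqrt_lt_R0; lra).
  unfold MR, gamma_.
  split; [|split; [|split]].
  - intros ->. rewrite SR_D, CR_D, DC, DA by (auto; lia). rewrite Eg, E2g.
    split; [field; lra|split; [field; lra|]].
    transitivity (2 / sqrt 2); [field; lra|apply two_sqrt].
  - intros Hr. rewrite SR_D, CR_D, (DA (pred n)), (DA n) by (auto; lia). rewrite E2g.
    split; [field; lra|split; [field; lra|]]. field. lra.
  - intros ->. rewrite SR_D, CR_D, (DA (pred (k_ m))), (DB (k_ m)) by (auto; lia). rewrite E2g.
    split; [field; lra|split; [field; lra|]].
    field; lra.
  - intros Hr. rewrite SR_D, CR_D, (DB (pred n)), (DB n) by (auto; lia). rewrite E2g.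
    split; [field; lra|split; [field; lra|]]. field. lra.
Qed.
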